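(* Let $\Omega$ be an open subset of $\mathbb{R}^p$ and let $f,f_n\colon\Omega\to\mathbb{R}^q$ ($n\in\mathbb{N}$), with $q\le p$, be $C^1$ maps such that $f_n'\to f'$ locally uniformly on $\Omega$ and $f_n\to f$ pointwise on $\Omega$. If $b\in\mathbb{R}^q$ is a regular value of $f$, then $f_n^{-1}(b)$ converges to $f^{-1}(b)$ in the Painlevé–Kuratowski sense in $\Omega$.
   Context: $b$ is a regular value of $f$ if $f'(x)$ is surjective for every $x\in f^{-1}(b)$. For subsets $A_n$ of the metric space $\Omega$, $\liminf A_n$ is the set of $x\in\Omega$ that are limits of sequences $x_n\in A_n$, $\limsup A_n$ is the set of $x\in\Omega$ that are limits of sequences $x_{n_k}\in A_{n_k}$ along some $n_1<n_2<\dots$, and $A_n$ converges to $A$ in the Painlevé–Kuratowski sense in $\Omega$ if $\liminf A_n=\limsup A_n=A$. *)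

(* Defs.v *)
From HB Require Import structures.
From mathcomp Require Import all_boot all_order all_algebra.
From mathcomp Require Import all_classical all_reals all_analysis.
Set Implicit Arguments. Unset Strict Implicit. Unset Printing Implicit Defensive.
Import Order.TTheory GRing.Theory Num.Theory.
Import numFieldNormedType.Exports.
Local Open Scope classical_set_scope.
Local Open Scope ring_scope.

(* Euclidean-type spaces R^p are modelled as row vectors 'rV[R]_p with
   MathComp-Analysis' normed structure; f' (x) is the differential 'd f x. *)

Definition C1_on (R : realType) (p q : nat) (O : set 'rV[R]_p)
    (f : 'rV[R]_p -> 'rV[R]_q) : Prop :=
  (forall x, O x -> differentiable f x) /\
  (forall x, O x -> forall eps : R, 0 < eps -> exists2 delta : R, 0 < delta &
     forall y, O y -> `|y - x| < delta ->
       forall u : 'rV[R]_p, `|u| <= 1 -> `|'d f y u - 'd f x u| <= eps).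

Definition deriv_cvg_locally_uniformly (R : realType) (p q : nat)
    (O : set 'rV[R]_p) (F : nat -> 'rV[R]_p -> 'rV[R]_q)
    (f : 'rV[R]_p -> 'rV[R]_q) : Prop :=
  forall x, O x -> exists2 r : R, 0 < r &
    (forall y, `|y - x| < r -> O y) /\
    forall eps : R, 0 < eps -> exists N : nat, forall n : nat, (N <= n)%N ->
      forall y, `|y - x| < r ->
        forall u : 'rV[R]_p, `|u| <= 1 -> `|'d (F n) y u - 'd f y u| <= eps.

Definition regular_value (R : realType) (p q : nat) (O : set 'rV[R]_p)
    (f : 'rV[R]_p -> 'rV[R]_q) (b : 'rV[R]_q) : Prop :=
  forall x, O x -> f x = b -> forall v : 'rV[R]_q, exists u : 'rV[R]_p, 'd f x u = v.

Definition PK_liminf (R : realType) (p : nat) (O : set 'rV[R]_p)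
    (A : nat -> set 'rV[R]_p) : set 'rV[R]_p :=
  [set x | O x /\ exists u : nat -> 'rV[R]_p,
     (exists N : nat, forall n : nat, (N <= n)%N -> A n (u n)) /\ u @ \oo --> x].

Definition PK_limsup (R : realType) (p : nat) (O : set 'rV[R]_p)
    (A : nat -> set 'rV[R]_p) : set 'rV[R]_p :=
  [set x | O x /\ exists (phi : nat -> nat) (u : nat -> 'rV[R]_p),
     (forall k : nat, (phi k < phi k.+1)%N) /\
     (forall k : nat, A (phi k) (u k)) /\ u @ \oo --> x].

Definition PK_converges (R : realType) (p : nat) (O : set 'rV[R]_p)
    (A : nat -> set 'rV[R]_p) (B : set 'rV[R]_p) : Prop :=
  PK_liminf O A = B /\ PK_limsup O A = B.

(* Main.v *)
Require Import Defs.
From HB Require Import structures.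
From mathcomp Require Import all_boot all_order all_algebra.
From mathcomp Require Import all_classical all_reals all_analysis.
From mathcomp Require Import lra ring.
Import Order.TTheory GRing.Theory Num.Theory.
Import numFieldNormedType.Exports.
Local Open Scope classical_set_scope.
Local Open Scope ring_scope.

Lemma cvg_seqP {R : realType} {V : normedModType R} (u : nat -> V) x :
  u @ \oo --> x <-> forall e : R, 0 < e -> exists N, forall n, (N <= n)%N -> `|x - u n| < e.
Proof.
split.
  move/cvgrPdist_lt => H e e0. have [N _ HN] := H e e0. exists N => n Nn; exact: HN.
move=> H; apply/cvgrPdist_lt => e e0; have [N HN] := H e e0; exists N => // n; exact: HN.
Qed.

Lemma scale_bound (R : realType) p q (D1 D2 : {linear 'rV[R]_p -> 'rV[R]_q}) (eps : R) :
  (forall u : 'rV[R]_p, `|u| <= 1 -> `|D1 u - D2 u| <= eps) ->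
  forall u, `|D1 u - D2 u| <= eps * `|u|.
Proof.
move=> H u.
have [->|u0] := eqVneq u 0.
  by rewrite !linear0 addr0 !normr0 mulr0.
have n0 : 0 < `|u| by rewrite normr_gt0.
pose v := `|u|^-1 *: u.
have uv : `|u| *: v = u by rewrite /v scalerA divff ?scale1r ?gt_eqF.
have hv : `|v| <= 1.
  by rewrite /v normrZ normfV normr_id mulVf ?gt_eqF.
have E1 : D1 u = `|u| *: D1 v by rewrite -linearZ /= uv.
have E2 : D2 u = `|u| *: D2 v by rewrite -linearZ /= uv.
rewrite E1 E2 -scalerBr normrZ normr_id mulrC ler_pM2r //.
exact: H.
Qed.

Lemma phi_ge (phi : nat -> nat) : (forall k, (phi k < phi k.+1)%N) -> forall k, (k <= phi k)%N.
Proof.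
move=> H; elim=> [//|k IH]; exact: leq_ltn_trans IH (H k).
Qed.

Lemma ball_convex (R : realType) p (x0 a c : 'rV[R]_p) (s t : R) :
  `|a - x0| <= s -> `|c - x0| <= s -> 0 <= t <= 1 -> `|a + t *: (c - a) - x0| <= s.
Proof.
move=> ha hc /andP[t0 t1].
have -> : a + t *: (c - a) - x0 = (1 - t) *: (a - x0) + t *: (c - x0).
  by apply/rowP => j; rewrite !mxE; ring.
apply: le_trans (ler_normD _ _) _.
rewrite !normrZ !ger0_norm ?subr_ge0 //.
have : (1 - t) * `|a - x0| <= (1 - t) * s by rewrite ler_wpM2l ?subr_ge0.
have : t * `|c - x0| <= t * s by rewrite ler_wpM2l.
lra.
Qed.

Lemma liminf_limsup (R : realType) p (O : set 'rV[R]_p) A : PK_liminf O A `<=` PK_limsup O A.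
Proof.
move=> x [Ox [u [[N HN] ux]]]; split => //.
exists (fun k => k + N)%N, (fun k => u (k + N)%N); split; first by move=> k; rewrite ltn_add2r.
split; first by move=> k; apply: HN; rewrite leq_addl.
apply/cvg_seqP => e e0; have [N' HN'] := (cvg_seqP u x).1 ux e e0.
exists N' => n nN; apply: HN'; exact: leq_trans nN (leq_addr _ _).
Qed.

Definition rVc (R : realType) (q : nat) := 'rV[R]_q.
HB.instance Definition _ (R : realType) (q : nat) := NormedModule.on (rVc R q).
HB.instance Definition _ (R : realType) (q : nat) := Complete.on (rVc R q).

Lemma fixpt (R : realType) (q : nat) (H : 'rV[R]_q -> 'rV[R]_q) (rho : R) :
  0 < rho -> (forall w, `|w| <= rho -> `|H w| <= rho) ->
  (forall w1 w2, `|w1| <= rho -> `|w2| <= rho -> `|H w1 - H w2| <= 2^-1 * `|w1 - w2|) ->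
  exists2 w, `|w| <= rho & H w = w.
Proof.
move=> rho0 HU HL.
pose U : set (rVc R q) := closed_ball 0 rho.
have UE : forall w : rVc R q, U w <-> `|w| <= rho.
  by move=> w; rewrite /U closed_ballE //= /closed_ball_ /= distrC subr0.
have HS : set_fun U U H by move=> w /UE /HU /UE.
pose Hf : {fun U >-> U} := HB.pack (H : rVc R q -> rVc R q) (isFun.Build _ _ U U H HS).
have ctr : is_contraction Hf.
  exists (2^-1)%:nng; split => /=; first by rewrite invf_lt1 // ltr1n.
  by move=> [a b] [/UE Ua /UE Ub] /=; exact: HL.
have U0 : U 0 by apply/UE; rewrite normr0 ltW.
have [w Uw Hw] := banach_fixed_point ctr (@closed_ball_closed _ _ _ _) (ex_intro _ 0 U0).
exists w; first exact/UE.
exact: (esym Hw).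
Qed.

Lemma mx_coord_le (R : realType) m n (M : 'M[R]_(m, n)) i j : `|M i j| <= `|M|.
Proof.
rewrite [leRHS]/Num.Def.normr/= mx_normrE.
exact: (le_bigmax _ (fun ij : 'I_m * 'I_n => `|M ij.1 ij.2|) (i, j)).
Qed.

Lemma mx_norm_leP (R : realType) m n (M : 'M[R]_(m, n)) (K : R) :
  0 <= K -> (forall i j, `|M i j| <= K) -> `|M| <= K.
Proof.
move=> K0 H; rewrite [leLHS]/Num.Def.normr/= mx_normrE.
by apply: bigmax_le => // -[i j] _; exact: H.
Qed.



Lemma mvt_lin (R : realType) p q (g A : 'rV[R]_p -> 'rV[R]_q) (x y : 'rV[R]_p) (K : R) :
  (forall t : R, 0 <= t <= 1 -> differentiable g (x + t *: (y - x))) ->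
  (forall t : R, 0 <= t <= 1 -> `|'d g (x + t *: (y - x)) (y - x) - A (y - x)| <= K) ->
  `|g y - g x - A (y - x)| <= K.
Proof.
move=> dg Kb.
have K0 : 0 <= K by apply: le_trans (Kb 0 _); rewrite ?lexx ?ler01.
apply: mx_norm_leP => // i j; rewrite (ord1 i) !mxE.
pose h := (cst x + *:%R^~ (y - x)) : R -> 'rV[R]_p.
have hE (t : R) : h t = x + t *: (y - x) by [].
have hd (t : R) : is_diff t h (0 + *:%R^~ (y - x)) :=
  is_diffD (is_diff_cst x t) (is_diff_scalel t (y - x)).
pose G := g \o h.
have Gd (t : R) : 0 <= t <= 1 -> differentiable G t.
  move=> t01; apply: differentiable_comp; first exact: ex_diff.
  by rewrite hE; exact: dg.
have GD (t : R) : 0 <= t <= 1 -> 'D_1 G t = 'd g (h t) (y - x).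
  move=> t01; rewrite deriveE; last exact: Gd.
  rewrite diff_comp; [|exact: ex_diff|by rewrite hE; exact: dg].
  by rewrite /= diff_val /= add0r scale1r.
pose phi := fun s => G s ord0 j.
have phid (t : R) : 0 <= t <= 1 -> derivable phi t 1.
  move=> t01; have dG : derivable G t 1 by apply: diff_derivable; exact: Gd.
  by move/derivable_mxP: dG; apply.
have phiD (t : R) : 0 <= t <= 1 -> 'D_1 phi t = ('d g (h t) (y - x)) ord0 j.
  move=> t01; rewrite -GD // derive_mx ?mxE //.
  by apply: diff_derivable; exact: Gd.
have [c c01 Hc] : exists2 c, c \in `[0, 1]%R & phi 1 - phi 0 = 'D_1 phi c * (1 - 0).
  apply: MVT_segment; first exact: ler01.
    move=> s; rewrite in_itv /= => /andP[s0 s1].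
    by apply: derivableP; apply: phid; rewrite !ltW.
  apply: continuous_subspace_itv => s; rewrite in_itv /= => s01.
  apply: differentiable_continuous; apply/derivable1_diffP; exact: phid.
move: c01; rewrite in_itv /= => c01.
have -> : g y ord0 j - g x ord0 j = phi 1 - phi 0.
  rewrite /phi /G /= hE hE.
  have -> : x + (1 : R) *: (y - x) = y by rewrite scale1r addrC subrK.
  by have -> : x + (0 : R) *: (y - x) = x by rewrite scale0r addr0.
rewrite Hc subr0 mulr1 phiD //.
apply: le_trans (Kb c c01).
rewrite -hE.
have := @mx_coord_le R 1 q ('d g (h c) (y - x) - A (y - x)) ord0 j.
by rewrite !mxE.
Qed.

Lemma arithA (R : realType) (X a c d z k e : R) :
  a < e / 2 -> c <= 2 * z -> d <= k * z -> z * (2 + k) <= e / 2 -> X <= a + c + d -> X < e.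
Proof. lra. Qed.

Lemma partA (R : realType) (p q : nat) (O : set 'rV[R]_p)
    (f : 'rV[R]_p -> 'rV[R]_q) (F : nat -> 'rV[R]_p -> 'rV[R]_q) (b : 'rV[R]_q) :
  C1_on O f -> (forall n : nat, C1_on O (F n)) ->
  deriv_cvg_locally_uniformly O F f ->
  (forall x, O x -> (fun n => F n x) @ \oo --> f x) ->
  forall x, O x -> forall (phi : nat -> nat) (u : nat -> 'rV[R]_p),
  (forall k, (phi k < phi k.+1)%N) ->
  (forall k, O (u k) /\ F (phi k) (u k) = b) -> u @ \oo --> x -> f x = b.
Proof.
move=> [fd fc] Fc unif pw x Ox phi u phiI Hu ux.
have [r r0 [rO unifx]] := unif x Ox.
have [k0 k00 Hk0] := linear_lipschitz (diff_continuous (fd x Ox)).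
have [d d0 Hd] := fc x Ox 1 ltr01.
have [N1 HN1] := unifx 1 ltr01.
pose rr := Num.min r d.
have rr0 : 0 < rr by rewrite lt_min r0 d0.
suff H : forall e : R, 0 < e -> `|f x - b| < e.
  case: (eqVneq (f x) b) => // ne.
  by have := H `|f x - b|; rewrite normr_gt0 subr_eq0 ne ltxx => /(_ isT).
move=> e e0.
have e20 : 0 < e / 2 by rewrite divr_gt0.
have [N2 HN2] := (cvg_seqP _ _).1 (pw x Ox) (e / 2) e20.
pose e' := Num.min rr (e / 2 / (2 + k0)).
have e'0 : 0 < e' by rewrite lt_min rr0 divr_gt0 ?divr_gt0 ?addr_gt0.
have [N3 HN3] := (cvg_seqP _ _).1 ux e' e'0.
pose k := (N1 + N2 + N3)%N.
have phik := @phi_ge phi phiI k.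
have kN3 : (N3 <= k)%N by rewrite /k leq_addl.
have phiN1 : (N1 <= phi k)%N by apply: leq_trans phik; rewrite /k -addnA leq_addr.
have phiN2 : (N2 <= phi k)%N by apply: leq_trans phik; rewrite /k addnAC leq_addl.
set n := phi k in phiN1 phiN2.
set z := u k.
have [Oz Fz] := Hu k.
have zx : `|z - x| < e' by rewrite distrC; exact: HN3.
have zxr : `|z - x| < rr by apply: lt_le_trans zx _; rewrite ge_min lexx.
have Hm : `|F n z - F n x - 'd f x (z - x)| <= 2 * `|z - x|.
  apply: mvt_lin => t /andP[t0 t1].
    have wx : `|x + t *: (z - x) - x| < rr.
      rewrite addrAC subrr add0r normrZ ger0_norm //.
      apply: le_lt_trans zxr; rewrite -[leRHS]mul1r ler_wpM2r //.
    have : O (x + t *: (z - x)) by apply: rO; apply: lt_le_trans wx _; rewrite ge_min lexx.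
    by move/(proj1 (Fc n)).
  have wx : `|x + t *: (z - x) - x| < rr.
    rewrite addrAC subrr add0r normrZ ger0_norm //.
    apply: le_lt_trans zxr; rewrite -[leRHS]mul1r ler_wpM2r //.
  have wr : `|x + t *: (z - x) - x| < r by apply: lt_le_trans wx _; rewrite ge_min lexx.
  have wd : `|x + t *: (z - x) - x| < d by apply: lt_le_trans wx _; rewrite ge_min lexx orbT.
  set w := x + t *: (z - x) in wx wr wd *.
  have Ow : O w by exact: rO.
  have h1 := @scale_bound R p q ('d (F n) w) ('d f w) 1 (fun v hv => HN1 n phiN1 w wr v hv) (z - x).
  have h2 := @scale_bound R p q ('d f w) ('d f x) 1 (fun v hv => Hd w Ow wd v hv) (z - x).
  rewrite mul1r in h1 h2.
  have -> : 'd (F n) w (z - x) - 'd f x (z - x) =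
     ('d (F n) w (z - x) - 'd f w (z - x)) + ('d f w (z - x) - 'd f x (z - x)).
    by rewrite addrA subrK.
  apply: le_trans (ler_normD _ _) _.
  by apply: le_trans (lerD h1 h2) _; rewrite mulr_natl mulr2n.
have h3 := Hk0 (z - x).
have h4 : `|f x - F n x| < e / 2 by exact: HN2.
have h5 : `|z - x| * (2 + k0) <= e / 2.
  rewrite -ler_pdivlMr ?addr_gt0 //; apply: ltW; apply: lt_le_trans zx _.
  by rewrite ge_min lexx orbT.
rewrite -Fz.
have -> : f x - F n z = (f x - F n x) - (F n z - F n x - 'd f x (z - x)) - 'd f x (z - x).
  by apply/rowP => j; rewrite !mxE; ring.
apply: arithA h4 Hm h3 h5 _.
apply: le_trans (ler_normB _ _) _; rewrite lerD2r; exact: ler_normB.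
Qed.

Lemma arithB1 (R : realType) (X a b rho : R) : X <= a + b -> a <= 2^-1 * rho -> b < rho / 2 -> X <= rho.
Proof. lra. Qed.

Lemma arithB2 (R : realType) (w a : R) : w <= 2^-1 * w + a -> w <= 2 * a.
Proof. lra. Qed.

Lemma partB (R : realType) (p q : nat) (O : set 'rV[R]_p)
    (f : 'rV[R]_p -> 'rV[R]_q) (F : nat -> 'rV[R]_p -> 'rV[R]_q) (b : 'rV[R]_q) :
  C1_on O f -> (forall n : nat, C1_on O (F n)) ->
  deriv_cvg_locally_uniformly O F f ->
  (forall x, O x -> (fun n => F n x) @ \oo --> f x) ->
  regular_value O f b ->
  forall x0, O x0 -> f x0 = b ->
  exists N (K : R), forall n, (N <= n)%N ->
    exists z, O z /\ F n z = b /\ `|z - x0| <= K * `|F n x0 - b|.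
Proof.
move=> [fd fc] Fc unif pw reg x0 Ox0 fx0.
pose L := 'd f x0.
have [U HU] := choice (fun j : 'I_q => reg x0 Ox0 fx0 ('e_j)).
pose M := fun v : 'rV[R]_q => \sum_(j < q) v ord0 j *: U j.
pose c := 1 + \sum_(j < q) `|U j|.
have c0 : 0 < c.
  apply: (lt_le_trans ltr01); rewrite lerDl sumr_ge0 // => j _.
have LM v : L (M v) = v.
  rewrite /M linear_sum /=.
  under eq_bigr do rewrite linearZ /= HU.
  by rewrite [RHS]row_sum_delta.
have MB w1 w2 : M w1 - M w2 = M (w1 - w2).
  by rewrite /M -sumrB; apply: eq_bigr => j _; rewrite !mxE scalerBl.
have Mb v : `|M v| <= c * `|v|.
  rewrite /M; apply: le_trans (ler_norm_sum _ _ _) _.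
  apply: (@le_trans _ _ (\sum_(j < q) `|v| * `|U j|)).
    apply: ler_sum => j _; rewrite normrZ ler_wpM2r //.
    exact: (@mx_coord_le R 1 q v ord0 j).
  rewrite -mulr_sumr mulrC ler_wpM2r // /c lerDr //.
have M0 : M 0 = 0 by rewrite /M; apply: big1 => j _; rewrite mxE scale0r.
pose e1 := (4 * c)^-1.
have e10 : 0 < e1 by rewrite /e1 invr_gt0 mulr_gt0.
have [d d0 Hd] := fc x0 Ox0 e1 e10.
have [r r0 [rO unifx]] := unif x0 Ox0.
have [N1 HN1] := unifx e1 e10.
pose rr := Num.min r d.
have rr0 : 0 < rr by rewrite lt_min r0 d0.
pose rho := rr / (2 * c).
have rho0 : 0 < rho by rewrite /rho divr_gt0 // mulr_gt0.
have crho : c * rho = rr / 2.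
  by rewrite /rho; field; rewrite gt_eqF.
have ec : (e1 + e1) * c = 2^-1.
  by rewrite /e1; field; rewrite gt_eqF.
have rho20 : 0 < rho / 2 by rewrite divr_gt0.
have [N2 HN2] := (cvg_seqP _ _).1 (pw x0 Ox0) (rho / 2) rho20.
exists (maxn N1 N2), (2 * c) => n nN.
have nN1 : (N1 <= n)%N by apply: leq_trans nN; rewrite leq_maxl.
have nN2 : (N2 <= n)%N by apply: leq_trans nN; rewrite leq_maxr.
have Hbnd : `|F n x0 - b| < rho / 2 by rewrite -fx0 distrC; exact: HN2.
have Mw w : `|w| <= rho -> `|(x0 + M w) - x0| <= rr / 2.
  move=> hw; rewrite addrAC subrr add0r; apply: le_trans (Mb w) _.
  by rewrite -crho ler_wpM2l // ltW.
have Oball y : `|y - x0| <= rr / 2 -> [/\ O y, `|y - x0| < r & `|y - x0| < d].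
  move=> hy.
  have hy' : `|y - x0| < rr by apply: le_lt_trans hy _; rewrite ltr_pdivrMr // ltr_pMr // ltr1n.
  have hr : `|y - x0| < r by apply: lt_le_trans hy' _; rewrite ge_min lexx.
  have hd : `|y - x0| < d by apply: lt_le_trans hy' _; rewrite ge_min lexx orbT.
  by split => //; exact: rO.
pose H := fun w => w - (F n (x0 + M w) - b).
have HL w1 w2 : `|w1| <= rho -> `|w2| <= rho -> `|H w1 - H w2| <= 2^-1 * `|w1 - w2|.
  move=> h1 h2.
  set z1 := x0 + M w1; set z2 := x0 + M w2.
  have zE : z1 - z2 = M (w1 - w2).
    by rewrite /z1 /z2 opprD addrACA subrr add0r MB.
  have Hm : `|F n z1 - F n z2 - L (z1 - z2)| <= (e1 + e1) * `|z1 - z2|.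
    apply: mvt_lin => t t01.
      have [Ow _ _] := Oball _ (@ball_convex R p _ _ _ _ _ (Mw w2 h2) (Mw w1 h1) t01).
      exact: (proj1 (Fc n)).
    have [Ow wr wd] := Oball _ (@ball_convex R p _ _ _ _ _ (Mw w2 h2) (Mw w1 h1) t01).
    set w := z2 + t *: (z1 - z2) in Ow wr wd *.
    have h1' := @scale_bound R p q ('d (F n) w) ('d f w) e1 (fun v hv => HN1 n nN1 w wr v hv) (z1 - z2).
    have h2' := @scale_bound R p q ('d f w) ('d f x0) e1 (fun v hv => Hd w Ow wd v hv) (z1 - z2).
    have -> : 'd (F n) w (z1 - z2) - L (z1 - z2) =
       ('d (F n) w (z1 - z2) - 'd f w (z1 - z2)) + ('d f w (z1 - z2) - 'd f x0 (z1 - z2)).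
      by rewrite addrA subrK.
    rewrite mulrDl; exact: le_trans (ler_normD _ _) (lerD h1' h2').
  have HE : H w1 - H w2 = - (F n z1 - F n z2 - L (z1 - z2)).
    rewrite zE LM /H.
    rewrite -/z1 -/z2; move: (F n z1) (F n z2) => a1 a2.
    by apply/rowP => j; rewrite !mxE; ring.
  rewrite HE normrN; apply: le_trans Hm _; rewrite zE.
  apply: (@le_trans _ _ ((e1 + e1) * (c * `|w1 - w2|))).
    by rewrite ler_wpM2l // addr_ge0 // ltW.
  by rewrite mulrA ec.
have H0 : H 0 = - (F n x0 - b) by rewrite /H M0 addr0 sub0r.
have HUb w : `|w| <= rho -> `|H w| <= rho.
  move=> hw.
  have -> : H w = (H w - H 0) + H 0 by rewrite subrK.
  apply: (@arithB1 R _ _ _ _ (ler_normD _ _)).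
    apply: le_trans (HL w 0 hw _) _; first by rewrite normr0 ltW.
    by rewrite subr0 ler_wpM2l.
  by rewrite H0 normrN.
have [w hw Hw] := @fixpt R q H rho rho0 HUb HL.
have Fz : F n (x0 + M w) = b.
  have : w - H w = F n (x0 + M w) - b by rewrite /H opprB addrC subrK.
  rewrite Hw subrr => /esym/eqP; rewrite subr_eq0 => /eqP //.
have w2 : `|w| <= 2 * `|F n x0 - b|.
  have h0 : `|(0 : 'rV[R]_q)| <= rho by rewrite normr0 ltW.
  have A1 := HL w 0 hw h0; rewrite subr0 in A1.
  have A2 := ler_normD (H w - H 0) (H 0); rewrite subrK in A2.
  have A3 : `|H 0| <= `|F n x0 - b| by rewrite H0 normrN.
  apply: arithB2; rewrite -{1}Hw.
  exact: le_trans A2 (lerD A1 A3).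
exists (x0 + M w); split; first by have [] := Oball _ (Mw w hw).
split => //.
rewrite addrAC subrr add0r; apply: le_trans (Mb w) _.
by rewrite -mulrA mulrCA ler_wpM2l // ltW.
Qed.

Lemma arithC (R : realType) (a K e X : R) : 0 <= a -> 0 < e -> X <= K * a ->
  a < e / (`|K| + 1) -> X < e.
Proof.
move=> a0 e0 hX ha.
have K1 : 0 < `|K| + 1 by rewrite ltr_pwDr // ltr01.
have hK : K * a <= (`|K| + 1) * a by rewrite ler_wpM2r // (le_trans (ler_norm K)) // lerDl ler01.
have : (`|K| + 1) * a < e by rewrite mulrC -ltr_pdivlMr.
move: hX hK; clear; lra.
Qed.

Theorem mainTheorem7 (R : realType) (p q : nat) (O : set 'rV[R]_p)
    (f : 'rV[R]_p -> 'rV[R]_q) (F : nat -> 'rV[R]_p -> 'rV[R]_q) (b : 'rV[R]_q) :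
  open O -> (q <= p)%N ->
  C1_on O f -> (forall n : nat, C1_on O (F n)) ->
  deriv_cvg_locally_uniformly O F f ->
  (forall x, O x -> (fun n => F n x) @ \oo --> f x) ->
  regular_value O f b ->
  PK_converges O (fun n => O `&` F n @^-1` [set b]) (O `&` f @^-1` [set b]).
Proof.
move=> oO qp C1f C1F unif pw reg.
have sub1 : PK_limsup O (fun n => O `&` F n @^-1` [set b]) `<=` (O `&` f @^-1` [set b]).
  move=> x [Ox [phi [u [phiI [Hu ux]]]]]; split => //.
  exact: (@partA R p q O f F b C1f C1F unif pw x Ox phi u phiI Hu ux).
have sub2 : (O `&` f @^-1` [set b]) `<=` PK_liminf O (fun n => O `&` F n @^-1` [set b]).
  move=> x [Ox fx]; split => //.
  have [N [K HK]] := @partB R p q O f F b C1f C1F unif pw reg x Ox fx.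
  have : forall n, exists z, (N <= n)%N -> O z /\ F n z = b /\ `|z - x| <= K * `|F n x - b|.
    move=> n; case: (leqP N n) => Nn; first by have [z Hz] := HK n Nn; exists z.
    by exists x.
  move=> /choice [u Hu]; exists u; split.
    by exists N => n Nn; have [? [? _]] := Hu n Nn.
  apply/cvg_seqP => e e0.
  have K1 : 0 < `|K| + 1 by rewrite ltr_pwDr // ltr01.
  have [N' HN'] := (cvg_seqP _ _).1 (pw x Ox) (e / (`|K| + 1)) (divr_gt0 e0 K1).
  exists (maxn N N') => n nN.
  have nN1 : (N <= n)%N by apply: leq_trans nN; rewrite leq_maxl.
  have nN2 : (N' <= n)%N by apply: leq_trans nN; rewrite leq_maxr.
  have [_ [_ hz]] := Hu n nN1.
  have h2 : `|F n x - b| < e / (`|K| + 1) by rewrite -fx distrC; exact: HN'.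
  rewrite distrC; exact: (@arithC R _ _ _ _ (normr_ge0 _) e0 hz h2).
split; apply/seteqP; split.
- by move=> x /(@liminf_limsup R p O _ x); exact: sub1.
- exact: sub2.
- exact: sub1.
- by move=> x /sub2 /(@liminf_limsup R p O _ x).
Qed.
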